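(* Let $G$ be a strongly connected digraph and $H$ its undirectization. If $H$ has at least two cycles with distinct vertex sets, then $G$ has at least two directed cycles with distinct vertex sets.
   Context: A digraph $G=(V,E)$, no loops or multiple edges. The undirectization $H$ is the undirected simple graph with edge $\{i,j\}$ whenever $(i,j)\in E$ or $(j,i)\in E$. A cycle of $H$ is a closed path of length $\ge3$ up to cyclic permutations and reversal; a directed cycle of $G$ is a closed directed path $(i_0,\dots,i_\ell=i_0)$ with $i_0,\dots,i_{\ell-1}$ distinct and $\ell\ge3$, up to cyclic permutations. The vertex set of a (directed) cycle is the set of its vertices. $G$ is strongly connected if any vertex can be reached from any other by a directed walk. *)

(* Defs.v *)
(* A digraph on a finite vertex type T is an irreflexive
   relation e : rel T ((i,j) is an arc iff e i j). *)
From mathcomp Require Import all_boot.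
Set Implicit Arguments.
Unset Strict Implicit.
Unset Printing Implicit Defensive.

Definition loopless (T : finType) (e : rel T) : Prop := irreflexive e.

Definition undirectize (T : finType) (e : rel T) : rel T :=
  fun i j => e i j || e j i.

Definition strongly_connected (T : finType) (e : rel T) : Prop :=
  forall x y : T, connect e x y.

(* For r = e it is a directed cycle of G; for r = undirectize e it is a cycle
   of H (distinct vertices and l >= 3 make it a genuine cycle). *)
Definition is_cycle (T : finType) (r : rel T) (s : seq T) : Prop :=
  [/\ uniq s, 3 <= size s & cycle r s].

Definition vset (T : finType) (s : seq T) : {set T} := [set x in s].

Definition directed_cycle (T : finType) (e : rel T) (s : seq T) : Prop :=
  is_cycle e s.

Definition undirected_cycle (T : finType) (e : rel T) (s : seq T) : Prop :=
  is_cycle (undirectize e) s.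

(* Main.v *)
Require Import Defs.
From mathcomp Require Import all_boot.
From Stdlib Require Import Classical.
From mathcomp Require Import zify.

Section S.
Variables (T : finType) (e : rel T).
Hypothesis Hl : loopless e.
Hypothesis Hsc : strongly_connected e.
Hypothesis NG : ~ exists c1 c2 : seq T,
    [/\ directed_cycle e c1, directed_cycle e c2 & vset c1 != vset c2].

Lemma memv (s : seq T) x : (x \in vset s) = (x \in s).
Proof. by rewrite inE. Qed.

Lemma rot_dc {r : rel T} n {c} : is_cycle r c -> is_cycle r (rot n c).
Proof. by case=> U S C; split; rewrite ?rot_uniq ?size_rot ?rot_cycle. Qed.

Lemma good {c1 c2} : directed_cycle e c1 -> directed_cycle e c2 -> vset c1 = vset c2.
Proof.
move=> D1 D2; apply/eqP; apply/negPn/negP => Hn; apply: NG; by exists c1, c2.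
Qed.

Lemma good_mem x {c1 c2} : directed_cycle e c1 -> directed_cycle e c2 ->
  (x \in c1) = (x \in c2).
Proof. by move=> D1 D2; rewrite -!memv (good D1 D2). Qed.

Lemma cut {b s a t} : directed_cycle e (b :: s ++ a :: t) -> e a b ->
  s != [::] -> t != [::] -> False.
Proof.
move=> DD; case: (DD) => U Sz Cy eab sn tn.
have E : b :: s ++ a :: t = (b :: s ++ [:: a]) ++ t by rewrite /= -catA.
have Dd : directed_cycle e (b :: s ++ [:: a]).
  split.
  - by move: U; rewrite E cat_uniq => /and3P[].
  - have : 0 < size s by move: sn; case: (s).
    by rewrite /= size_cat /=; lia.
  - move: Cy; rewrite /cycle rcons_cat /= !cat_path /=.
    by move=> /and3P[P1 P2 _]; rewrite rcons_cat cat_path P1 /= P2 eab.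
idtac.
have G := good Dd DD.
clear Sz Cy; case: t tn E U G DD => [//|x t'] _ E U G DD.
move: U; rewrite E cat_uniq => /and3P[_ /hasPn Hx _].
have := Hx x (mem_head _ _).
have : x \in vset (b :: s ++ a :: x :: t') by rewrite memv !(inE, mem_cat) eqxx !orbT.
by rewrite -G memv => ->.
Qed.

Lemma arc_cyc {x y} : e x y -> e y x \/
  exists D, [/\ directed_cycle e D, x \in D & y \in D].
Proof.
move=> exy; have /connectP [p Pp Lp] := Hsc y x.
case: (shortenP Pp) Lp => p' Pp' Up' _.
case: p' Pp' Up' => [|z [|w p'']] /= Pp' Up' Lp.
- by subst; rewrite Hl in exy.
- by left; subst; move: Pp'; rewrite andbT.
- right; exists [:: y, z, w & p'']; split.
  + split => //.
    rewrite /= rcons_path -Lp exy andbT; by case/and3P: Pp' => -> -> ->.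
  + by rewrite Lp in_cons [_ \in z :: _]in_cons (mem_last w p'') !orbT.
  + exact: mem_head.
Qed.

Lemma bid {D a b} : directed_cycle e D -> undirectize e a b ->
  (a \notin D) || (b \notin D) -> e a b.
Proof.
move=> DD /orP [//|eba] Hn.
case: (arc_cyc eba) => [//|[D' [DD' bD aD]]].
by move: Hn; rewrite -(good_mem a DD' DD) -(good_mem b DD' DD) aD bD.
Qed.

Lemma lastC {P : pred T} {l} : has P l ->
  exists s1 a p1, [/\ l = s1 ++ a :: p1, P a & all (predC P) p1].
Proof.
elim: l => [//|h l IH] /=.
case: (boolP (has P l)) => [/IH [s1 [a [p1 [-> Pa Ap]]]] _ | nh].
  by exists (h :: s1), a, p1.
rewrite orbF => Ph; exists [::], h, l; split => //.
by apply/allP => z zl /=; apply/negP => Pz; move/hasP: nh; apply; exists z.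
Qed.

Lemma firstC {P : pred T} {l} : has P l ->
  exists p a s2, [/\ l = p ++ a :: s2, P a & all (predC P) p].
Proof.
elim: l => [//|h l IH] /=.
case: (boolP (P h)) => [Ph _ | nPh /= hl].
  by exists [::], h, l.
have [p [a [s2 [-> Pa Ap]]]] := IH hl.
by exists (h :: p), a, s2; rewrite /= nPh.
Qed.

Lemma conv {D} b : directed_cycle e D -> forall w a, w != [::] ->
  all (fun z => z \notin D) w ->
  path (undirectize e) a (w ++ [:: b]) -> path e a (w ++ [:: b]).
Proof.
move=> DD; elim => [//|y w IH] a _ /= /andP[yD Aw] /andP[Hay Pw].
rewrite (bid DD Hay) ?yD ?orbT //=.
case: w IH Aw Pw => [|y' w'] IH Aw Pw.
  by move: Pw => /= /andP[Hyb _]; rewrite (bid DD Hyb) ?yD.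
exact: IH.
Qed.

Lemma case1core {D a w b s2} : directed_cycle e D ->
  undirected_cycle e (a :: w ++ b :: s2) -> a \in D -> b \in D ->
  all (fun z => z \notin D) w -> w != [::] -> False.
Proof.
move=> DD [UZ SZ CZ] aD bD Aw wn.
have ab : a != b.
  by move: UZ => /= /andP[aw _]; apply/eqP => Eab; move: aw; rewrite Eab mem_cat inE eqxx orbT.
have Pw : path e a (w ++ [:: b]).
  apply: (conv b DD w a wn Aw).
  by move: CZ; rewrite /cycle rcons_cat !cat_path /= => /andP[-> /andP[-> _]].
have [j q Ej] := rot_to bD.
have aq : a \in q.
  by move: aD; rewrite -(mem_rot j) Ej inE (negbTE ab).
case/splitPr: aq Ej => s t Ej.
have DR := rot_dc j (c:=D) DD; rewrite Ej in DR; case: (DR) => UR SR CR.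
have Dd : directed_cycle e (b :: s ++ a :: w).
  split.
  - have -> : b :: s ++ a :: w = (b :: s ++ [:: a]) ++ w by rewrite /= -catA.
    have E : b :: s ++ a :: t = (b :: s ++ [:: a]) ++ t by rewrite /= -catA.
    move: (UR); rewrite E cat_uniq => /and3P[U1 _ _].
    have Uw : uniq w.
      by move: UZ => /= /andP[_]; rewrite cat_uniq => /and3P[].
    rewrite cat_uniq U1 Uw andbT /=; apply/hasPn => z zw.
    have zD : z \notin D by move/allP: Aw; apply.
    apply: contra zD => zin; rewrite -(mem_rot j) Ej.
    by move: zin; rewrite E mem_cat => ->.
  - have : 0 < size w by case: (w) wn.
    by rewrite /= size_cat /=; lia.
  - move: CR; rewrite /cycle rcons_cat cat_path /= => /and3P[P1 P2 _].
    by rewrite rcons_cat cat_path P1 /= P2 -cats1.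
have G := good Dd DR.
case: w wn Aw {Pw UZ SZ CZ Dd} G => [//|z w'] _ /= /andP[zD _] G.
have : z \in vset (b :: s ++ a :: z :: w') by rewrite memv !(inE, mem_cat) eqxx !orbT.
rewrite G memv -Ej mem_rot => zin; by rewrite zin in zD.
Qed.

Lemma case1 {D Z v x y} : directed_cycle e D -> undirected_cycle e Z ->
  v \in Z -> v \notin D -> x \in Z -> y \in Z -> x \in D -> y \in D ->
  x != y -> False.
Proof.
move=> DD DZ vZ vD xZ yZ xD yD xy.
have [i r Ei] := rot_to vZ.
have Z1 := rot_dc i (c:=Z) DZ; rewrite Ei in Z1.
have xr : x \in r.
  move: xZ; rewrite -(mem_rot i) Ei inE => /orP[/eqP xv|//].
  by move: vD; rewrite -xv xD.
have yr : y \in r.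
  move: yZ; rewrite -(mem_rot i) Ei inE => /orP[/eqP yv|//].
  by move: vD; rewrite -yv yD.
have hr : has (fun z => z \in D) r by apply/hasP; exists x.
have [s1 [a [p1 [Er aD Ap1]]]] := lastC hr.
have Z2 := rot_dc (size (v :: s1)) Z1.
rewrite Er -cat_cons rot_size_cat /= in Z2.
have hs : has (fun z => z \in D) s1.
  apply/negPn/negP => nh.
  have only : forall z, z \in r -> z \in D -> z = a.
    move=> z; rewrite Er mem_cat inE => /orP[zs|/orP[/eqP//|zp]] zD.
    - by case/negP: nh; apply/hasP; exists z.
    - by move/allP: Ap1 => /(_ z zp) /=; rewrite zD.
  by move: xy; rewrite (only x xr xD) (only y yr yD) eqxx.
have [p2 [b [s2 [Es bD Ap2]]]] := firstC hs.
have E2 : a :: p1 ++ v :: p2 ++ b :: s2 = a :: (p1 ++ v :: p2) ++ b :: s2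
  by rewrite -catA.
rewrite Es E2 in Z2.
apply: (case1core DD Z2 aD bD).
- rewrite all_cat /= vD; apply/andP; split; [exact: Ap1 | exact: Ap2].
- by case: (p1).
Qed.

Lemma idx2 (q1 q4 : seq T) b a : uniq (q1 ++ b :: a :: q4) ->
  index a (q1 ++ b :: a :: q4) = (index b (q1 ++ b :: a :: q4)).+1.
Proof.
rewrite cat_uniq => /and3P[_ /hasPn Hq /andP[ba _]].
have bn := Hq b (mem_head _ _).
have an : a \notin q1 by apply: Hq; rewrite inE mem_head orbT.
have nba : (b == a) = false.
  by apply/negbTE; move: ba; rewrite inE negb_or => /andP[].
rewrite !index_cat (negbTE bn) (negbTE an) /= nba !eqxx.
lia.
Qed.

Lemma str {u q a b} : directed_cycle e (u :: q) -> a \in q -> b \in q -> e a b ->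
  index b q = (index a q).+1 \/ index a q = (index b q).+1.
Proof.
move=> DD aq bq eab.
have ab : a != b by apply/eqP => E; rewrite E Hl in eab.
case: (DD) => U _ _.
case/splitPr: bq U DD aq => q1 q2 U DD aq.
move: aq; rewrite mem_cat inE (negbTE ab) /= => /orP[aq1|aq2].
- case/splitPr: aq1 U DD => q3 q4 U DD.
  case: q4 U DD => [|z q4'] U DD.
  + left; rewrite -catA /=; apply: idx2.
    by move: U => /= /andP[_]; rewrite -catA.
  + exfalso.
    have R := rot_dc (size (u :: q3 ++ a :: z :: q4')) DD.
    rewrite (_ : u :: (q3 ++ a :: z :: q4') ++ b :: q2
               = (u :: q3 ++ a :: z :: q4') ++ b :: q2) // rot_size_cat in R.
    rewrite (_ : (b :: q2) ++ u :: q3 ++ a :: z :: q4'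
               = b :: (q2 ++ u :: q3) ++ a :: z :: q4') in R; last by rewrite /= -catA.
    by apply: (cut R eab) => //; case: (q2).
- case/splitPr: aq2 U DD => q3 q4 U DD.
  case: q3 U DD => [|z q3'] U DD.
  + right; rewrite cat0s; apply: idx2.
    by move: U => /= /andP[_].
  + exfalso.
    have R := rot_dc (size (u :: q1)) DD.
    rewrite (_ : u :: q1 ++ b :: (z :: q3') ++ a :: q4
               = (u :: q1) ++ b :: (z :: q3') ++ a :: q4) // rot_size_cat in R.
    rewrite (_ : (b :: (z :: q3') ++ a :: q4) ++ u :: q1
               = b :: (z :: q3') ++ a :: (q4 ++ u :: q1)) in R; last by rewrite /= -catA.
    by apply: (cut R eab) => //; case: (q4).
Qed.

Lemma exmax (f : T -> nat) (s : seq T) : s != [::] ->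
  exists2 x, x \in s & forall y, y \in s -> f y <= f x.
Proof.
elim: s => [//|h s IH] _.
case: s IH => [|h' s'] IH.
  by exists h; [exact: mem_head | move=> y; rewrite inE => /eqP->].
have [x xs Hx] := IH isT.
case: (leqP (f h) (f x)) => hx.
  exists x; first by rewrite inE xs orbT.
  by move=> y; rewrite inE => /orP[/eqP->|/Hx].
exists h; first exact: mem_head.
move=> y; rewrite inE => /orP[/eqP->//|/Hx]; lia.
Qed.

Lemma case2 {D Z u} : directed_cycle e D -> undirected_cycle e Z ->
  {subset Z <= D} -> u \in D -> u \notin Z -> False.
Proof.
move=> DD [UZ SZ CZ] ZD uD uZ.
have [i q Ei] := rot_to uD.
have D1 := rot_dc i (c:=D) DD; rewrite Ei in D1.
have Zq : forall z, z \in Z -> z \in q.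
  move=> z zZ; have := ZD z zZ; rewrite -(mem_rot i) Ei inE => /orP[/eqP zu|//].
  by move: uZ; rewrite -zu zZ.
have hstep : forall a b, a \in q -> b \in q -> undirectize e a b ->
    index b q <= index a q -> index a q = (index b q).+1.
  move=> a b aq bq /orP[eab|eba] le.
  - by case: (str D1 aq bq eab); lia.
  - by case: (str D1 bq aq eba); lia.
have Zn : Z != [::] by apply/eqP => Z0; rewrite Z0 in SZ.
have [x xZ Hx] := exmax (fun z => index z q) Z Zn.
have [k r Ek] := rot_to xZ.
have UR : uniq (x :: r) by rewrite -Ek rot_uniq.
have SR : 2 < size (x :: r) by rewrite -Ek size_rot.
have CR : cycle (undirectize e) (x :: r) by rewrite -Ek rot_cycle.
case: r Ek UR SR CR => [|y [|z m]] Ek UR SR CR //.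
have mem_r : forall w, w \in [:: x, y, z & m] -> w \in Z.
  by move=> w; rewrite -Ek mem_rot.
have Hxy : undirectize e x y by move: CR => /= /andP[].
have Hy'x : undirectize e (last z m) x.
  by move: CR; rewrite /cycle rcons_path => /andP[_ H]; exact: H.
have Hxy' : undirectize e x (last z m) by move: Hy'x; rewrite /undirectize orbC.
have y'in : last z m \in [:: x, y, z & m].
  by rewrite in_cons [_ \in y :: _]in_cons (mem_last z m) !orbT.
have yin : y \in [:: x, y, z & m] by rewrite in_cons mem_head orbT.
have xq := Zq x xZ.
have yq := Zq y (mem_r y yin).
have y'q := Zq _ (mem_r _ y'in).
have e1 := hstep x y xq yq Hxy (Hx y (mem_r y yin)).
have e2 := hstep x _ xq y'q Hxy' (Hx _ (mem_r _ y'in)).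
have Eyy : y = last z m.
  by apply: (index_inj x yq y'q); apply/eqP; rewrite -eqSS -e1 -e2.
move: UR => /= /andP[_ /andP[+ _]].
by rewrite Eyy (mem_last z m).
Qed.

Lemma oneway {s x} : path (undirectize e) x s -> ~~ path e x s ->
  exists a b, [/\ a \in x :: s, b \in x :: s, e b a & ~~ e a b].
Proof.
elim: s x => [//|y s IH] x /= /andP[Hxy Ps].
case: (boolP (e x y)) => exy /=.
  move=> /(IH y Ps) [a [b [aI bI eba nab]]].
  by exists a, b; split => //; rewrite inE ?aI ?bI orbT.
move=> _; exists x, y; split => //; first exact: mem_head.
  by rewrite inE mem_head orbT.
by move: Hxy; rewrite /undirectize (negbTE exy).
Qed.

Lemma key Z : undirected_cycle e Z ->
  exists D, directed_cycle e D /\ vset D = vset Z.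
Proof.
move=> DZ; case: (DZ) => UZ SZ CZ.
case: (boolP (cycle e Z)) => cz.
  by exists Z.
case: Z DZ UZ SZ CZ cz => [//|z r] DZ UZ SZ CZ cz.
have [a [b [aI bI eba nab]]] := oneway CZ cz.
have aZ : a \in z :: r by move: aI; rewrite in_cons mem_rcons in_cons orbA orbb.
have bZ : b \in z :: r by move: bI; rewrite in_cons mem_rcons in_cons orbA orbb.
case: (arc_cyc eba) => [eab|[D [DD bD aD]]]; first by rewrite eab in nab.
exists D; split => //.
have ab : a != b by apply/eqP => E; rewrite E Hl in eba.
case: (boolP (has (fun v => v \notin D) (z :: r))) => [/hasP[v vZ vD]|hn].
  by exfalso; apply: (case1 DD DZ vZ vD aZ bZ aD bD ab).
have ZD : {subset z :: r <= D}.
  by move=> w wZ; apply/negPn; move/hasPn: hn; apply.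
case: (boolP (has (fun u => u \notin z :: r) D)) => [/hasP[u uD uZ]|hn'].
  by exfalso; apply: (case2 DD DZ ZD uD uZ).
apply/setP => w; rewrite !memv; apply/idP/idP => [wD|/ZD//].
by apply/negPn; move/hasPn: hn'; apply.
Qed.
End S.

Theorem lemma2p5 (T : finType) (e : rel T) :
  loopless e -> strongly_connected e ->
  (exists s1 s2 : seq T,
      [/\ undirected_cycle e s1, undirected_cycle e s2 & vset s1 != vset s2]) ->
  exists c1 c2 : seq T,
    [/\ directed_cycle e c1, directed_cycle e c2 & vset c1 != vset c2].
Proof.
move=> Hl Hsc [s1 [s2 [H1 H2 Hn]]].
apply: NNPP => NG.
have [D1 [DD1 E1]] := key _ _ Hl Hsc NG _ H1.
have [D2 [DD2 E2]] := key _ _ Hl Hsc NG _ H2.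
by move: Hn; rewrite -E1 -E2 (good _ _ NG DD1 DD2) eqxx.
Qed.
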